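(* Let $n\ge2$, let $\mathbb{K}$ contain a primitive $n$-th root of unity $\zeta_n$, and let $\mathbb{L}/\mathbb{K}$ be a Galois extension of degree $N=n^m$ with Galois group generated by commuting $\theta_1,\dots,\theta_m$ such that $\mathbf{i}\mapsto\boldsymbol\theta^\mathbf{i}$ is a bijection $\Delta(n)^m\to G$. Suppose $\alpha_1,\dots,\alpha_m\in\mathbb{L}^\times$ satisfy $\theta_i(\alpha_j)=\alpha_j$ for $i\ne j$ and $\theta_i(\alpha_i)=\zeta_n\alpha_i$. Order $\Delta(n)^m=\{\mathbf{i}^{(1)},\dots,\mathbf{i}^{(N)}\}$ in reverse lexicographic order ($\mathbf{i}\prec\mathbf{i}'$ iff $i_k<i'_k$ for the largest index $k$ with $i_k\neq i'_k$), and put $\mathcal{B}_m=(\boldsymbol\alpha^{\mathbf{i}^{(1)}},\dots,\boldsymbol\alpha^{\mathbf{i}^{(N)}})$ and $X=(\boldsymbol\zeta^{\mathbf{i}^{(1)}},\dots,\boldsymbol\zeta^{\mathbf{i}^{(N)}})$, the points of $U_n^m$ where $U_n$ is the set of $n$-th roots of unity. Let $0\le r\le m(n-1)$. Then $\mathcal{B}_m$ is a $\mathbb{K}$-basis of $\mathbb{L}$, and for every $\mathbf{j}\in\Delta(n)^m$, \[\mathrm{ev}_{\mathcal{B}_m}(\boldsymbol\theta^\mathbf{j})=\big(\mathbf{x}^\mathbf{j}(\boldsymbol\zeta^{\mathbf{i}^{(1)}}),\dots,\mathbf{x}^\mathbf{j}(\boldsymbol\zeta^{\mathbf{i}^{(N)}})\big)\cdot\mathrm{Diag}(\mathcal{B}_m).\]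 Consequently, if $Y_{r,m}\in\mathbb{K}^{k\times N}$ is the matrix whose rows are the evaluation vectors $(\mathbf{x}^\mathbf{j}(\boldsymbol\zeta^{\mathbf{i}^{(1)}}),\dots,\mathbf{x}^\mathbf{j}(\boldsymbol\zeta^{\mathbf{i}^{(N)}}))$ for $\mathbf{j}\in\Delta(n)^m$ with $|\mathbf{j}|\le r$, then $Y_{r,m}$ is a generator matrix of the Hamming-metric code $\mathrm{HRM}_X(r,m)$, and $Y_{r,m}\,\mathrm{Diag}(\mathcal{B}_m)$ is a generator matrix of $\mathrm{RM}_{\boldsymbol\theta}(r,\mathbf{n})(\mathcal{B}_m)$, $\mathbf{n}=(n,\dots,n)$.
   Context: $\Delta(n)=\{0,\dots,n-1\}$; $\boldsymbol\theta^\mathbf{i}=\theta_1^{i_1}\circ\cdots\circ\theta_m^{i_m}$; $|\mathbf{j}|=\sum_kj_k$; $\boldsymbol\alpha^\mathbf{i}=\prod_k\alpha_k^{i_k}$; $\boldsymbol\zeta^\mathbf{i}=(\zeta_n^{i_1},\dots,\zeta_n^{i_m})\in\mathbb{K}^m$; $\mathbf{x}^\mathbf{j}=x_1^{j_1}\cdots x_m^{j_m}$. $\mathrm{Diag}(\mathcal{B}_m)$ is the $N\times N$ diagonal matrix with diagonal $\mathcal{B}_m$. For $\mathbf{b}\in\mathbb{L}^N$ and $P=\sum b_g g\in\mathbb{L}[G]$, $\mathrm{ev}_\mathbf{b}(P)=(P(b_1),\dots,P(b_N))$ with $P(x)=\sum b_gg(x)$, and $\mathcal{C}(\mathbf{b})=\{\mathrm{ev}_\mathbf{b}(c):c\in\mathcal{C}\}$.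 $\mathrm{RM}_{\boldsymbol\theta}(r,\mathbf{n})=\mathrm{span}_\mathbb{L}\{\boldsymbol\theta^\mathbf{j}:\mathbf{j}\in\Delta(n)^m,|\mathbf{j}|\le r\}$. $\mathrm{HRM}_X(r,m)=\{(p(u_1),\dots,p(u_N)):p\in\mathbb{K}[x_1,\dots,x_m],\deg p\le r\}\subseteq\mathbb{K}^N$ where $u_1,\dots,u_N$ are the points of $X$ in the given order; a generator matrix is a matrix whose rows form a basis of the code. *)

(* Defs.v *)
From HB Require Import structures.
From mathcomp Require Import all_boot all_order all_algebra all_fingroup all_field.
From mathcomp.multinomials Require Import mpoly.
Set Implicit Arguments. Unset Strict Implicit. Unset Printing Implicit Defensive.
Import GRing.Theory.
Local Open Scope ring_scope.

(* Delta(n)^m is {ffun 'I_m -> 'I_n}. *)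

Definition revlex_lt (n m : nat) (i i' : {ffun 'I_m -> 'I_n}) : Prop :=
  exists k : 'I_m, (i k < i' k)%N /\ forall l : 'I_m, (k < l)%N -> i l = i' l.

Definition jdeg (n m : nat) (j : {ffun 'I_m -> 'I_n}) : nat := (\sum_(k < m) (j k : nat))%N.

Definition thetaPow (K : fieldType) (L : splittingFieldType K) (n m : nat)
  (theta : 'I_m -> gal_of {:L}) (j : {ffun 'I_m -> 'I_n}) : gal_of {:L} :=
  (\prod_(k < m) theta k ^+ j k)%g.

Definition alphaPow (L : fieldType) (n m : nat) (alpha : 'I_m -> L)
  (i : {ffun 'I_m -> 'I_n}) : L := \prod_(k < m) alpha k ^+ i k.

Definition zetaPt (K : fieldType) (n m : nat) (zeta : K) (i : {ffun 'I_m -> 'I_n})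
  : 'I_m -> K := fun k => zeta ^+ i k.

Definition monoEval (K : fieldType) (n m : nat) (j : {ffun 'I_m -> 'I_n})
  (u : 'I_m -> K) : K := \prod_(k < m) u k ^+ j k.

(* group algebra L[G], G = Gal(L/K): elements sum_g b_g g represented by g |-> b_g *)
Definition galg (K : fieldType) (L : splittingFieldType K) := gal_of {:L} -> L.

Definition gdelta (K : fieldType) (L : splittingFieldType K) (g : gal_of {:L}) : galg L :=
  fun h => (h == g)%:R.

Definition evb (K : fieldType) (L : splittingFieldType K) (N : nat) (b : 'I_N -> L)
  (P : galg L) : 'rV[L]_N :=
  \row_(t < N) \sum_(g : gal_of {:L}) P g * g (b t).

Definition RM_code (K : fieldType) (L : splittingFieldType K) (n m : nat)
  (theta : 'I_m -> gal_of {:L}) (r : nat) (P : galg L) : Prop :=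
  exists c : {ffun 'I_m -> 'I_n} -> L,
    forall g, P g = \sum_(j | (jdeg j <= r)%N) c j * gdelta (thetaPow theta j) g.

Definition code_eval (K : fieldType) (L : splittingFieldType K) (N : nat)
  (C : galg L -> Prop) (b : 'I_N -> L) (v : 'rV[L]_N) : Prop :=
  exists P, C P /\ v = evb b P.

(* HRM_X(r,m) for the ordered points u_1..u_N of K^m (deg 0 = -oo) *)
Definition HRM (K : fieldType) (m N : nat) (u : 'I_N -> ('I_m -> K)) (r : nat)
  (v : 'rV[K]_N) : Prop :=
  exists p : {mpoly K[m]}, (msize p <= r.+1)%N /\ v = \row_(t < N) p.@[u t].

Definition is_generator_matrix (F : fieldType) (k N : nat) (M : 'M[F]_(k, N))
  (C : 'rV[F]_N -> Prop) : Prop :=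
  row_free M /\ forall v : 'rV[F]_N, C v <-> (v <= M)%MS.

Definition lowdeg (n m r : nat) : {set {ffun 'I_m -> 'I_n}} := [set j | (jdeg j <= r)%N].

Definition Ymat (K : fieldType) (n m : nat) (zeta : K) (e : 'I_(n ^ m) -> {ffun 'I_m -> 'I_n})
  (r : nat) : 'M[K]_(#|lowdeg n m r|, n ^ m) :=
  \matrix_(i < #|lowdeg n m r|, t < n ^ m)
     monoEval (enum_val i) (zetaPt zeta (e t)).

(* Main.v *)
From HB Require Import structures.
From mathcomp Require Import all_boot all_order all_algebra all_fingroup all_field.
From mathcomp.multinomials Require Import mpoly.
From mathcomp Require Import zify.
From Stdlib Require Import FunctionalExtensionality.
Require Import Defs.
Import GRing.Theory.
Set Implicit Arguments. Unset Strict Implicit.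
Local Open Scope ring_scope.

Definition chi (K : fieldType) (n m : nat) (zeta : K) (a x : {ffun 'I_m -> 'I_n}) : K :=
  \prod_k (zeta ^+ a k) ^+ x k.
Definition chib (K : fieldType) (n m : nat) (zeta : K) (a x : {ffun 'I_m -> 'I_n}) : K :=
  \prod_k (zeta ^+ (n - a k)) ^+ x k.

Lemma chiC (K : fieldType) (n m : nat) (zeta : K) a x : chi (n:=n) (m:=m) zeta a x = chi zeta x a.
Proof. by apply: eq_bigr => k _; rewrite exprAC. Qed.

Lemma geom_sum (K : fieldType) (n : nat) (w : K) : w ^+ n = 1 ->
  \sum_(x < n) w ^+ x = if w == 1 then n%:R else 0.
Proof.
move=> wn; case: eqP => [->|/eqP w1].
  by rewrite (eq_bigr (fun _ => 1)) ?sumr_const ?card_ord // => x _; rewrite expr1n.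
have: (w - 1) * \sum_(x < n) w ^+ x = 0 by rewrite -subrX1 wn subrr.
by move/eqP; rewrite mulf_eq0 subr_eq0 (negbTE w1) => /eqP.
Qed.

Lemma mod_lemma (a b n : nat) : (a < n)%N -> (b < n)%N ->
  ((a + (n - b)) %% n == 0)%N = (a == b).
Proof.
move=> an bn; case: (ltngtP a b) => [ab|ba|->].
- have ->: (a + (n - b) = n - (b - a))%N by lia.
  rewrite modn_small; last by lia.
  apply/eqP; lia.
- have ->: (a + (n - b) = (a - b) + n)%N by lia.
  rewrite modnDr modn_small; last by lia.
  apply/eqP; lia.
- have ->: (b + (n - b) = n)%N by lia.
  by rewrite modnn eqxx.
Qed.

Lemma orth (K : fieldType) (n m : nat) (zeta : K) : n.-primitive_root zeta ->
  forall a b : {ffun 'I_m -> 'I_n},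
  \sum_x chi zeta a x * chib zeta b x = (a == b)%:R * (n ^ m)%:R.
Proof.
move=> Hz a b.
have wexp k : (zeta ^+ (a k + (n - b k))) ^+ n = 1.
  by rewrite exprAC (prim_expr_order Hz) expr1n.
transitivity (\sum_(x : {ffun 'I_m -> 'I_n}) \prod_k (zeta ^+ (a k + (n - b k))) ^+ x k).
  apply: eq_bigr => x _; rewrite /chi /chib -big_split /=.
  by apply: eq_bigr => k _; rewrite -exprMn exprD.
rewrite -(bigA_distr_bigA (fun k (x : 'I_n) => (zeta ^+ (a k + (n - b k))) ^+ x)) /=.
rewrite (eq_bigr (fun k => if (a k == b k :> nat) then n%:R else 0)); last first.
  move=> k _; rewrite geom_sum // -(expr0 zeta) (eq_prim_root_expr Hz) mod0n.
  by rewrite mod_lemma.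
case: eqP => [->|ab].
  rewrite mul1r (eq_bigr (fun _ => n%:R)) ?prodr_const ?card_ord ?natrX // => k _.
  by rewrite eqxx.
have [k ak] : exists k, (a k != b k :> nat).
  case: (pickP (fun k => a k != b k :> nat)) => [k ak|H]; first by exists k.
  exfalso; apply: ab; apply/ffunP => k; apply/val_inj/eqP.
  by have := H k; move/negbT; rewrite negbK.
by rewrite mul0r (bigD1 k) //= (negbTE ak) mul0r.
Qed.
Lemma theta_alpha (K : fieldType) (L : splittingFieldType K) (n m : nat) (zeta : K)
  (theta : 'I_m -> gal_of {:L}) (alpha : 'I_m -> L) :
  (forall i j, i != j -> theta i (alpha j) = alpha j) ->
  (forall i, theta i (alpha i) = zeta%:A * alpha i) ->
  forall (j : {ffun 'I_m -> 'I_n}) l,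
  thetaPow theta j (alpha l) = (zeta ^+ j l)%:A * alpha l.
Proof.
move=> H1 H2 j l.
pose Q (g : gal_of {:L}) (c : K) := g (alpha l) = c%:A * alpha l.
have Qmul g c h d : Q g c -> Q h d -> Q (g * h)%g (c * d).
  rewrite /Q => Hg Hh; rewrite galM ?memvf // Hg !mulr_algl linearZ /= Hh mulr_algl scalerA.
  by rewrite mulrC.
have Q1 : Q 1%g 1 by rewrite /Q gal_id scale1r mul1r.
have Qt k : Q (theta k) (if k == l then zeta else 1).
  by case: eqP => [->|/eqP kl]; rewrite /Q ?H2 // H1 // scale1r mul1r.
have QX g c p : Q g c -> Q (g ^+ p)%g (c ^+ p).
  move=> Hg; elim: p => [|p IH]; first by rewrite expg0 expr0.
  by rewrite expgS exprS; apply: Qmul.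
have := @big_ind2 _ _ Q _ _ _ _ Q1 Qmul _ (index_enum 'I_m) xpredT
   (fun k => theta k ^+ j k)%g (fun k => (if k == l then zeta else 1) ^+ j k)
   (fun k _ => QX _ _ (j k) (Qt k)).
rewrite /Q /thetaPow => ->; congr (_%:A * _).
rewrite (bigD1 l) //= eqxx big1 ?mulr1 // => k /negbTE ->; by rewrite expr1n.
Qed.

Lemma theta_B (K : fieldType) (L : splittingFieldType K) (n m : nat) (zeta : K)
  (theta : 'I_m -> gal_of {:L}) (alpha : 'I_m -> L) :
  (forall i j, i != j -> theta i (alpha j) = alpha j) ->
  (forall i, theta i (alpha i) = zeta%:A * alpha i) ->
  forall (j i : {ffun 'I_m -> 'I_n}),
  thetaPow theta j (alphaPow alpha i) = (chi zeta j i)%:A * alphaPow alpha i.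
Proof.
move=> H1 H2 j i; rewrite /alphaPow /chi rmorph_prod.
rewrite -in_algE rmorph_prod -big_split /=; apply: eq_bigr => k _.
rewrite rmorphXn -[X in X ^+ _]/(thetaPow theta j (alpha k)) (theta_alpha H1 H2).
by rewrite exprMn; congr (_ * _); rewrite /GRing.in_alg /= exprZn expr1n.
Qed.

Theorem mainTheorem18 (K : fieldType) (n m : nat) (zeta : K)
  (L : splittingFieldType K)
  (theta : 'I_m -> gal_of {:L}) (alpha : 'I_m -> L)
  (e : 'I_(n ^ m) -> {ffun 'I_m -> 'I_n}) (r : nat) :
  (2 <= n)%N ->
  n.-primitive_root zeta ->
  galois 1%VS {:L} ->
  \dim {:L} = (n ^ m)%N ->
  (forall i j, commute (theta i) (theta j)) ->
  injective (@thetaPow K L n m theta) ->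
  (forall j : {ffun 'I_m -> 'I_n}, thetaPow theta j \in ('Gal({:L} / 1%VS))%g) ->
  (forall g, g \in ('Gal({:L} / 1%VS))%g -> exists j : {ffun 'I_m -> 'I_n}, thetaPow theta j = g) ->
  (forall k, alpha k != 0) ->
  (forall i j, i != j -> theta i (alpha j) = alpha j) ->
  (forall i, theta i (alpha i) = zeta%:A * alpha i) ->
  bijective e ->
  (forall s t : 'I_(n ^ m), (s < t)%N -> revlex_lt (e s) (e t)) ->
  (r <= m * (n - 1))%N ->
  let B := fun t : 'I_(n ^ m) => alphaPow alpha (e t) in
  let X := fun t : 'I_(n ^ m) => zetaPt zeta (e t) in
  let Y := Ymat zeta e r in
  [/\ basis_of {:L} [seq B t | t <- enum 'I_(n ^ m)],
      (forall j : {ffun 'I_m -> 'I_n},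
         evb B (gdelta (thetaPow theta j))
         = map_mx (fun x : K => x%:A) (\row_(t < n ^ m) monoEval j (X t))
             *m diag_mx (\row_(t < n ^ m) B t)),
      is_generator_matrix Y (HRM X r)
    & is_generator_matrix (map_mx (fun x : K => x%:A) Y *m diag_mx (\row_(t < n ^ m) B t))
        (code_eval (RM_code n theta r) B)].
Proof.
move=> n2 Hz _ Hdim _ _ _ _ Hanz H1 H2 He _ _ B X Y.
have n0 : (0 < n)%N by apply: ltnW.
have [einv eK Ke] := He.
have einj : injective e := can_inj eK.
have NZ : (n ^ m)%:R != 0 :> K by rewrite natrX expf_neq0 // (prim_root_natf_neq0 Hz).
have Bnz t : B t != 0 by rewrite /B /alphaPow; apply/prodf_neq0 => k _; rewrite expf_neq0.
have thB j t : thetaPow theta j (B t) = (chi zeta j (e t))%:A * B t := theta_B H1 H2 j (e t).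
have sumE (F : {ffun 'I_m -> 'I_n} -> K) : \sum_(t < n ^ m) F (e t) = \sum_a F a.
  by rewrite (reindex e) //; apply: onW_bij.
have H0 : [ffun => Ordinal n0] \in lowdeg n m r.
  by rewrite inE /jdeg big1 // => k _; rewrite ffunE.
have Yentry i t : Y i t = chi zeta (enum_val i) (e t) by rewrite mxE chiC.
have Yfree : row_free Y.
  apply/row_freeP; exists (\matrix_(t, i') ((n ^ m)%:R^-1 * chib zeta (enum_val i') (e t))).
  apply/matrixP => i i'; rewrite !mxE.
  transitivity ((n ^ m)%:R^-1 * \sum_t chi zeta (enum_val i) (e t) * chib zeta (enum_val i') (e t)).
    by rewrite mulr_sumr; apply: eq_bigr => t _; rewrite Yentry !mxE mulrCA.
  rewrite (sumE (fun a => chi zeta (enum_val i) a * chib zeta (enum_val i') a)) (orth Hz).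
  by rewrite (inj_eq enum_val_inj) mulrCA mulVf // mulr1.
split.
- rewrite basisEfree size_map size_enum_ord Hdim leqnn subvf /= andbT.
  have -> : [seq B t | t <- enum 'I_(n ^ m)] = [tuple B t | t < n ^ m] :> seq L.
    by rewrite /mktuple.
  apply/freeP => k Hk s.
  have Hk' : \sum_t k t *: B t = 0.
    apply: etrans Hk; rewrite unlock /=.
    congr reducebig; apply: functional_extensionality => i.
    by rewrite nth_mktuple.
  have Hj j : \sum_t (k t * chi zeta j (e t)) *: B t = 0.
    have := congr1 (thetaPow theta j) Hk'; rewrite linear_sum linear0 => HH; apply: etrans HH.
    apply: eq_bigr => t _; rewrite linearZ /= -[X in _ = _ *: X]/(thetaPow theta j (B t)).
    by rewrite thB mulr_algl scalerA; reflexivity.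
  have : \sum_j chib zeta (e s) j *: \sum_t (k t * chi zeta j (e t)) *: B t = 0.
    by rewrite big1 // => j _; rewrite Hj scaler0.
  rewrite (eq_bigr (fun j => \sum_t (chib zeta (e s) j * (k t * chi zeta j (e t))) *: B t));
    last by move=> j _; rewrite scaler_sumr; apply: eq_bigr => t _; rewrite scalerA.
  rewrite exchange_big /=.
  rewrite (eq_bigr (fun t => (k t * ((e t == e s)%:R * (n ^ m)%:R)) *: B t)); last first.
    move=> t _; rewrite -scaler_suml; congr (_ *: _); rewrite -(orth Hz) mulr_sumr.
    apply: eq_bigr => j _; rewrite chiC mulrCA; congr (_ * _); exact: mulrC.
  rewrite (bigD1 s) //= eqxx mul1r big1 ?addr0; last first.
    by move=> t ts; rewrite (inj_eq einj) (negbTE ts) mul0r mulr0 scale0r.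
  by move/eqP; rewrite scaler_eq0 (negbTE (Bnz s)) orbF mulf_eq0 (negbTE NZ) orbF => /eqP.
- move=> j; apply/rowP => t; rewrite /evb mul_mx_diag !mxE /gdelta.
  rewrite (bigD1 (thetaPow theta j)) //= eqxx mul1r big1 ?addr0; last first.
    by move=> g /negbTE ->; rewrite mul0r.
  rewrite -[LHS]/(thetaPow theta j (B t)) thB chiC; reflexivity.
- split => // v; split.
  + case=> p [Hp ->].
    have -> : \row_t p.@[X t] = \sum_(mo <- msupp p) p@_mo *: \row_t \prod_i (X t i) ^+ mo i.
      apply/rowP => t; rewrite mxE mevalE summxE; apply: eq_bigr => mo _; rewrite !mxE.
      reflexivity.
    rewrite big_seq; apply: summx_sub => mo Hmo; apply: scalemx_sub.
    pose jr : {ffun 'I_m -> 'I_n} := [ffun k => Ordinal (ltn_pmod (mo k) n0)].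
    have jrin : jr \in lowdeg n m r.
      rewrite inE /jdeg; have := msize_mdeg_lt Hmo; rewrite mdegE => lt.
      apply: (@leq_trans (\sum_k mo k)%N).
        by apply: leq_sum => k _; rewrite ffunE /= leq_mod.
      by rewrite -ltnS (leq_trans lt Hp).
    have -> : \row_t \prod_i (X t i) ^+ mo i = row (enum_rank_in H0 jr) Y.
      apply/rowP => t; rewrite !mxE enum_rankK_in //.
      rewrite /monoEval /X /zetaPt; apply: eq_bigr => k _; rewrite ffunE /=.
      by rewrite expr_mod // exprAC (prim_expr_order Hz) expr1n.
    exact: row_sub.
  + move/submxP => [u ->].
    exists (\sum_i u 0 i *: 'X_[[multinom (enum_val i k : nat) | k < m]]).
    split.
      apply: leq_trans; first exact: msize_sum.
      apply/bigmax_leqP => i _.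
      apply: leq_trans (msizeZ_le _ _) _; rewrite msizeX ltnS mdegE.
      have := enum_valP i; rewrite inE /jdeg => Hi.
      by rewrite (eq_bigr _ (fun k _ => mnmE _ k)).
    apply/rowP => t; rewrite !mxE raddf_sum /=; apply: eq_bigr => i _.
    rewrite mevalZ mevalX !mxE; congr (_ * _); apply: eq_bigr => k _.
    by rewrite mnmE.
- have Ment i t : (map_mx (fun x : K => x%:A) Y *m diag_mx (\row_(t < n ^ m) B t)) i t
      = (chi zeta (enum_val i) (e t))%:A * B t.
    by rewrite mul_mx_diag !mxE chiC; reflexivity.
  have evbE (c : {ffun 'I_m -> 'I_n} -> L) :
      evb B (fun g => \sum_(j | (jdeg j <= r)%N) c j * gdelta (thetaPow theta j) g)
      = \sum_(j | (jdeg j <= r)%N) c j *: \row_t ((chi zeta j (e t))%:A * B t).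
    apply/rowP => t; rewrite !mxE summxE.
    rewrite (eq_bigr (fun g => \sum_(j | (jdeg j <= r)%N)
        c j * gdelta (thetaPow theta j) g * g (B t))); last by move=> g _; rewrite mulr_suml.
    rewrite exchange_big; apply: eq_bigr => j _; rewrite !mxE /gdelta.
    rewrite (bigD1 (thetaPow theta j)) //= eqxx mulr1 big1 ?addr0; last first.
      by move=> g /negbTE ->; rewrite mulr0 mul0r.
    by rewrite -[X in _ * X = _]/(thetaPow theta j (B t)) thB.
  split.
    rewrite /row_free mxrankMfree.
      by rewrite (mxrank_map (in_alg L)).
    rewrite row_free_unit unitmxE det_diag unitfE; apply/prodf_neq0 => t _.
    by rewrite mxE Bnz.
  move=> v; split.
  + case=> P [[c Hc] ->].
    have -> : evb B P = evb B (fun g => \sum_(j | (jdeg j <= r)%N) c j * gdelta (thetaPow theta j) g).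
      by apply/rowP => t; rewrite !mxE; apply: eq_bigr => g _; rewrite Hc.
    rewrite evbE; apply: summx_sub => j Hj; apply: scalemx_sub.
    have jin : j \in lowdeg n m r by rewrite inE.
    have -> : \row_t ((chi zeta j (e t))%:A * B t) = row (enum_rank_in H0 j)
        (map_mx (fun x : K => x%:A) Y *m diag_mx (\row_(t < n ^ m) B t)).
      by apply/rowP => t; rewrite [RHS]mxE Ment [LHS]mxE enum_rankK_in.
    exact: row_sub.
  + move/submxP => [u ->].
    exists (fun g => \sum_(j | (jdeg j <= r)%N) u 0 (enum_rank_in H0 j) * gdelta (thetaPow theta j) g).
    split; first by exists (fun j => u 0 (enum_rank_in H0 j)).
    rewrite evbE; apply/rowP => t; rewrite !mxE summxE.
    rewrite (eq_bigl (fun j => j \in lowdeg n m r)) => [|j]; last by rewrite inE.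
    rewrite [RHS]big_enum_val; apply: eq_bigr => i _; rewrite Ment !mxE enum_valK_in.
    reflexivity.
Qed.
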